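(* Let $N\ge 1$, $h,\varepsilon\in(0,1)$, and let $V=(v_1,\dots,v_N)\in[-1,1]^N$ satisfy $v_1\le v_2\le\dots\le v_N$. For $k=1,\dots,N$ let $J(v_k)=\{l\in\{1,\dots,N\}: |v_l-v_k|\le\varepsilon\}$, let $I(v_k)$ be its cardinality, and set $$\Delta_k=\frac{h}{I(v_k)}\sum_{l\in J(v_k)} v_l .$$ Then $\Delta_{k+1}\ge \Delta_k$ for $k=1,\dots,N-1$.
   Context: $\Delta_k=w_k(V)-v_k$, where $w_k(V)=v_k+\frac{h}{I(v_k)}\sum_{l\in J(v_k)}v_l$ is the unclipped update of the opinion model. *)

(* Defs.v *)
(* Opinions are indexed 1..N as in the paper: v : nat -> R,
   only the values v 1, ..., v N matter. *)
From mathcomp Require Import all_boot all_order all_algebra.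
Set Implicit Arguments. Unset Strict Implicit. Unset Printing Implicit Defensive.
Import Order.TTheory GRing.Theory Num.Theory.
Local Open Scope ring_scope.

Definition inJ {R : realFieldType} (eps : R) (v : nat -> R) (k l : nat) : bool :=
  `|v l - v k| <= eps.

Definition Icard {R : realFieldType} (N : nat) (eps : R) (v : nat -> R) (k : nat) : nat :=
  count (inJ eps v k) (iota 1 N).

Definition Delta {R : realFieldType} (N : nat) (h eps : R) (v : nat -> R) (k : nat) : R :=
  h / (Icard N eps v k)%:R * \sum_(l <- iota 1 N | inJ eps v k l) v l.

(* Main.v *)
Require Import Defs.
From mathcomp Require Import all_boot all_order all_algebra.
From mathcomp Require Import lra zify.
Import Order.TTheory GRing.Theory Num.Theory.
Local Open Scope ring_scope.

Lemma key (R : realFieldType) (a b eps p q : R) : a <= b -> p <= q ->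
  `|q - a| <= eps -> `|p - b| <= eps -> `|p - a| <= eps /\ `|q - b| <= eps.
Proof.
move=> ab pq; rewrite !ler_norml => /andP[h1 h2] /andP[h3 h4].
split; apply/andP; split; lra.
Qed.

Lemma pt (R : realFieldType) (a b eps x y : R) : a <= b ->
  0 <= ((`|x - a| <= eps) && (`|y - b| <= eps))%:R * (y - x)
     + ((`|y - a| <= eps) && (`|x - b| <= eps))%:R * (x - y).
Proof.
move=> ab; have [xy|yx] := lerP x y.
- case: (boolP (`|y - a| <= eps)) => H1 /=; last first.
    by rewrite mul0r addr0; apply: mulr_ge0 => //; rewrite subr_ge0.
  case: (boolP (`|x - b| <= eps)) => H2 /=; last first.
    by rewrite mul0r addr0; apply: mulr_ge0 => //; rewrite subr_ge0.
  have [-> ->] := @key _ _ _ _ _ _ ab xy H1 H2; rewrite /= mul1r; lra.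
- have yx' := ltW yx.
  case: (boolP (`|x - a| <= eps)) => H1 /=; last first.
    by rewrite mul0r add0r; apply: mulr_ge0 => //; rewrite subr_ge0.
  case: (boolP (`|y - b| <= eps)) => H2 /=; last first.
    by rewrite mul0r add0r; apply: mulr_ge0 => //; rewrite subr_ge0.
  have [-> ->] := @key _ _ _ _ _ _ ab yx' H1 H2; rewrite /= mul1r; lra.
Qed.

Lemma andR (R : realFieldType) (a b : bool) : (a && b)%:R = a%:R * b%:R :> R.
Proof. by case: a; case: b; rewrite ?mulr1 ?mulr0. Qed.

Lemma cntR (R : realFieldType) (p : pred nat) s :
  (count p s)%:R = \sum_(l <- s) (p l)%:R :> R.
Proof.
elim: s => [|x s IH]; first by rewrite big_nil.
by rewrite big_cons /= natrD IH.
Qed.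

Lemma sumI (R : realFieldType) (p : pred nat) s (f : nat -> R) :
  \sum_(l <- s | p l) f l = \sum_(l <- s) (p l)%:R * f l.
Proof.
rewrite big_mkcond; apply: eq_bigr => i _; by case: (p i); rewrite ?mul1r ?mul0r.
Qed.

Theorem lemma2 (R : realFieldType) (N : nat) (h eps : R) (v : nat -> R) :
  (1 <= N)%N ->
  0 < h < 1 -> 0 < eps < 1 ->
  (forall i : nat, (1 <= i <= N)%N -> -1 <= v i <= 1) ->
  (forall i : nat, (1 <= i < N)%N -> v i <= v i.+1) ->
  forall k : nat, (1 <= k <= N - 1)%N -> Delta N h eps v k <= Delta N h eps v k.+1.
Proof.
move=> N1 /andP[h0 _] /andP[e0 _] _ mono k /andP[k1 kN].
have ab : v k <= v k.+1 by apply: mono; apply/andP; split => //; lia.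
set s := iota 1 N.
set S := inJ eps v k; set T := inJ eps v k.+1.
have cpos : forall j, (1 <= j <= N)%N -> (0 < count (inJ eps v j) s)%N.
  move=> j hj; rewrite -has_count; apply/hasP; exists j.
    by rewrite mem_iota; lia.
  by rewrite /inJ subrr normr0 ltW.
have cS : 0 < (count S s)%:R :> R by rewrite ltr0n; apply: cpos; lia.
have cT : 0 < (count T s)%:R :> R by rewrite ltr0n; apply: cpos; lia.
rewrite /Delta /Icard -/s -/S -/T -!mulrA ler_pM2l //.
rewrite ler_pdivrMl // mulrCA ler_pdivlMl // -subr_ge0.
rewrite !cntR (@sumI _ T) (@sumI _ S).
have -> : forall (a b c d : R), a * b - c * d = b * a - d * c.
  by move=> a b c d; rewrite [a * b]mulrC [c * d]mulrC.
have e1 : (\sum_(i <- s) (T i)%:R * v i) * (\sum_(j <- s) (S j)%:R)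
   = \sum_(i <- s) \sum_(j <- s) (S i)%:R * (T j)%:R * v j.
  rewrite mulr_suml; under eq_bigr => i _ do rewrite mulr_sumr.
  rewrite exchange_big; apply: eq_bigr => i _; apply: eq_bigr => j _.
  by rewrite /= mulrC mulrA.
have e2 : (\sum_(i <- s) (S i)%:R * v i) * (\sum_(j <- s) (T j)%:R)
   = \sum_(i <- s) \sum_(j <- s) (S i)%:R * (T j)%:R * v i.
  rewrite mulr_suml; apply: eq_bigr => i _; rewrite mulr_sumr; apply: eq_bigr => j _.
  by rewrite -!mulrA [v i * _]mulrC.
rewrite e1 e2 -sumrB.
under eq_bigr => i _ do rewrite -sumrB.
under eq_bigr => i _ do under eq_bigr => j _ do rewrite -mulrBr.
set E := (X in 0 <= X).
have E2 : E *+ 2 = \sum_(i <- s) \sum_(j <- s)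
   ((S i)%:R * (T j)%:R * (v j - v i) + (S j)%:R * (T i)%:R * (v i - v j)).
  rewrite mulr2n {1}/E exchange_big /E -big_split /=; apply: eq_bigr => i _.
  by rewrite addrC -big_split.
have : 0 <= E *+ 2.
  rewrite E2; apply: sumr_ge0 => i _; apply: sumr_ge0 => j _.
  have := @pt _ _ _ eps (v i) (v j) ab.
  by rewrite /S /T /inJ !andR.
by rewrite pmulrn_lge0.
Qed.
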